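(* Let $\Lambda$ be a $\mathbb Z$-lattice of rank $\mu\ge1$ with a unimodular bilinear form $L$, let $M_h$ be the automorphism with $L(M_h(a),b)=-L(b,a)$ for all $a,b\in\Lambda$, and assume $M_h$ is of finite order. (a) For each eigenvalue $\lambda\ne1$ of $M_h$, the sesquilinear form $h_\lambda:\Lambda_\lambda\times\Lambda_\lambda\to\mathbb C$, $h_\lambda(a,b):=\sqrt{-\lambda}\cdot L(a,\bar b)$, is hermitian, i.e. $h_\lambda(b,a)=\overline{h_\lambda(a,b)}$; in particular $\sqrt{-\lambda}L(a,\bar a)\in\mathbb R$. Together these define a hermitian form $h:=\bigoplus_{\lambda\ne1}h_\lambda$. (b) For an $M_h$-invariant subspace $V\subset\Lambda_{\mathbb C}$ on which $1$ is not an eigenvalue of $M_h$, the following are equivalent: ($\alpha$) $h|_V$ is positive definite; ($\beta$) the hermitian form $(a,b)\mapsto L(a,\bar b)+L(\bar b,a)$ on $V$ is positive definite.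
   Context: $\Lambda_{\mathbb C}:=\Lambda\otimes\mathbb C$, $L$ extended bilinearly, complex conjugation with respect to $\Lambda$; $\Lambda_\lambda:=\ker(M_h-\lambda\,\mathrm{id})\subset\Lambda_{\mathbb C}$. The square root on $S^1-\{-1\}$ is $\sqrt{e^{2\pi i\alpha}}:=e^{\pi i\alpha}$ for $\alpha\in(-\tfrac12,\tfrac12)$. *)

(* Defs.v *)
From HB Require Import structures.
From mathcomp Require Import all_boot all_order all_algebra.
From mathcomp Require Import complex.
From mathcomp Require Import reals.
Set Implicit Arguments. Unset Strict Implicit. Unset Printing Implicit Defensive.
Import Order.TTheory GRing.Theory Num.Theory.
Local Open Scope ring_scope.

Definition bil (T : comNzRingType) (n : nat) (A : 'M[T]_n) (a b : 'cV[T]_n) : T :=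
  ((a^T *m A) *m b) 0 0.

Definition toC (R : realType) (m n : nat) (A : 'M[int]_(m, n)) : 'M[R[i]]_(m, n) :=
  map_mx (fun z : int => z%:~R) A.

(* complex conjugation on Lambda_C w.r.t. Lambda: entrywise conjugation *)
Definition cconj (R : realType) (n : nat) (v : 'cV[R[i]]_n) : 'cV[R[i]]_n :=
  map_mx (fun z => z^*) v.

Definition LC (R : realType) (n : nat) (A : 'M[int]_n) (a b : 'cV[R[i]]_n) : R[i] :=
  bil (toC R A) a b.

Definition in_eigsp (R : realType) (n : nat) (M : 'M[int]_n) (l : R[i]) (v : 'cV[R[i]]_n) : Prop :=
  toC R M *m v = l *: v.

Definition is_eigenvalue (R : realType) (n : nat) (M : 'M[int]_n) (l : R[i]) : Prop :=
  exists v : 'cV[R[i]]_n, v != 0 /\ in_eigsp M l v.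

(* The square root on S^1 - {-1}: sqrt(e^{2 pi i a}) = e^{pi i a}, a in (-1/2,1/2),
   i.e. the square root with positive real part. *)
Definition sqrtS1 (R : realType) (z : R[i]) : R[i] :=
  let w := sqrtC z in if 0 < 'Re w then w else - w.

Definition hl (R : realType) (n : nat) (A : 'M[int]_n) (l : R[i]) (a b : 'cV[R[i]]_n) : R[i] :=
  sqrtS1 (- l) * LC A a (cconj b).

Definition eig_decomp (R : realType) (n : nat) (M : 'M[int]_n) (v : 'cV[R[i]]_n)
  (s : seq R[i]) (w : R[i] -> 'cV[R[i]]_n) : Prop :=
  uniq s /\ (forall l, l \in s -> in_eigsp M l (w l)) /\ v = \sum_(l <- s) w l.

(* h := (+)_{lambda <> 1} h_lambda, evaluated on the diagonal via the
   eigen-decomposition of v. *)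
Definition h_diag (R : realType) (n : nat) (A : 'M[int]_n) (s : seq R[i])
  (w : R[i] -> 'cV[R[i]]_n) : R[i] :=
  \sum_(l <- s | l != 1) hl A l (w l) (w l).

Definition h_posdef (R : realType) (n : nat) (A M : 'M[int]_n)
  (V : {vspace 'cV[R[i]]_n}) : Prop :=
  forall v, v \in V -> v != 0 ->
    forall s w, eig_decomp M v s w -> 0 < h_diag A s w.

Definition g_posdef (R : realType) (n : nat) (A : 'M[int]_n)
  (V : {vspace 'cV[R[i]]_n}) : Prop :=
  forall v, v \in V -> v != 0 -> 0 < LC A v (cconj v) + LC A (cconj v) v.

(* Main.v *)
Require Import Defs.
From HB Require Import structures.
From mathcomp Require Import all_boot all_order all_algebra all_field.
From mathcomp Require Import complex.
From mathcomp Require Import reals.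
Import Order.TTheory GRing.Theory Num.Theory.
Set Implicit Arguments. Unset Strict Implicit. Unset Printing Implicit Defensive.
Local Open Scope ring_scope.

Lemma delta_entry (T : comNzRingType) n (X : 'M[T]_n) i j :
  (((delta_mx i (0 : 'I_1))^T *m X) *m delta_mx j (0 : 'I_1)) 0 0 = X i j.
Proof. by rewrite trmx_delta -rowE -colE !mxE. Qed.

Lemma bil_mat n (A M : 'M[int]_n)
  (hML : forall a b : 'cV[int]_n, bil A (M *m a) b = - bil A b a) :
  M^T *m A = - A^T.
Proof.
apply/matrixP => i j; have := hML (delta_mx i 0) (delta_mx j 0).
rewrite /bil trmx_mul -(mulmxA _ M^T A) delta_entry delta_entry.
by rewrite !mxE => ->.
Qed.

Lemma toC_mat (R : realType) n (A M : 'M[int]_n)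
  (hML : forall a b : 'cV[int]_n, bil A (M *m a) b = - bil A b a) :
  (toC R M)^T *m toC R A = - (toC R A)^T.
Proof. by rewrite /toC map_trmx -map_mxM bil_mat // map_mxN map_trmx. Qed.

Lemma LC_skew (R : realType) n (A M : 'M[int]_n)
  (hML : forall a b : 'cV[int]_n, bil A (M *m a) b = - bil A b a)
  (x y : 'cV[R[i]]_n) : LC A (toC R M *m x) y = - LC A y x.
Proof.
rewrite /LC /bil trmx_mul -(mulmxA _ (toC R M)^T) toC_mat //.
rewrite -[in RHS](trmxK ((y^T *m toC R A) *m x)) [in RHS]mxE.
rewrite !trmx_mul trmxK.
by rewrite mulmxN mulNmx mulmxA mxE.
Qed.

Lemma toC_conj (R : realType) m n (B : 'M[int]_(m, n)) :
  map_mx Num.conj (toC R B) = toC R B.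
Proof. by apply/matrixP => i j; rewrite !mxE rmorph_int. Qed.

Lemma cconjM (R : realType) n (B : 'M[int]_n) (x : 'cV[R[i]]_n) :
  cconj (toC R B *m x) = toC R B *m cconj x.
Proof. by rewrite /cconj map_mxM toC_conj. Qed.

Lemma cconjZ (R : realType) n (c : R[i]) (x : 'cV[R[i]]_n) :
  cconj (c *: x) = c^* *: cconj x.
Proof. by rewrite /cconj map_mxZ. Qed.

Lemma cconjK (R : realType) n (x : 'cV[R[i]]_n) : cconj (cconj x) = x.
Proof. by apply/matrixP => i j; rewrite !mxE conjCK. Qed.

Lemma cconj0 (R : realType) n : cconj (0 : 'cV[R[i]]_n) = 0.
Proof. by apply/matrixP => i j; rewrite !mxE conjC0. Qed.

Lemma LC_conj (R : realType) n (A : 'M[int]_n) (x y : 'cV[R[i]]_n) :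
  LC A (cconj x) (cconj y) = (LC A x y)^*.
Proof.
rewrite /LC /bil /cconj -(toC_conj R A) map_trmx -!map_mxM.
by rewrite [in RHS]toC_conj mxE.
Qed.

Lemma LC_sumL (R : realType) n (A : 'M[int]_n) (I : Type) (s : seq I)
  (F : I -> 'cV[R[i]]_n) y :
  LC A (\sum_(i <- s) F i) y = \sum_(i <- s) LC A (F i) y.
Proof.
rewrite /LC /bil linear_sum /= !mulmx_suml summxE.
by apply: eq_bigr.
Qed.

Lemma LC_sumR (R : realType) n (A : 'M[int]_n) (I : Type) (s : seq I)
  (F : I -> 'cV[R[i]]_n) x :
  LC A x (\sum_(i <- s) F i) = \sum_(i <- s) LC A x (F i).
Proof.
rewrite /LC /bil mulmx_sumr summxE.
by apply: eq_bigr.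
Qed.

Lemma LC_scaleL (R : realType) n (A : 'M[int]_n) c (x y : 'cV[R[i]]_n) :
  LC A (c *: x) y = c * LC A x y.
Proof. by rewrite /LC /bil linearZ /= -!scalemxAl mxE. Qed.

Lemma LC_scaleR (R : realType) n (A : 'M[int]_n) c (x y : 'cV[R[i]]_n) :
  LC A x (c *: y) = c * LC A x y.
Proof. by rewrite /LC /bil -scalemxAr mxE. Qed.

Lemma LC0l (R : realType) n (A : 'M[int]_n) (y : 'cV[R[i]]_n) : LC A 0 y = 0.
Proof. by rewrite -(scale0r (0 : 'cV[R[i]]_n)) LC_scaleL mul0r. Qed.

Lemma LC0r (R : realType) n (A : 'M[int]_n) (y : 'cV[R[i]]_n) : LC A y 0 = 0.
Proof. by rewrite -(scale0r (0 : 'cV[R[i]]_n)) LC_scaleR mul0r. Qed.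

Lemma toC_pow (R : realType) n (M : 'M[int]_n) k :
  toC R (M ^+ k) = (toC R M) ^+ k.
Proof.
elim: k => [|k IH]; first by rewrite !expr0 /toC map_mx1.
by rewrite !exprS -IH /toC -!mulmxE map_mxM.
Qed.

Lemma eig_pow (R : realType) n (M : 'M[int]_n) l (w : 'cV[R[i]]_n) k :
  in_eigsp M l w -> (toC R M) ^+ k *m w = l ^+ k *: w.
Proof.
move=> hw; elim: k => [|k IH]; first by rewrite !expr0 mul1mx scale1r.
by rewrite exprSr -mulmxA hw -scalemxAr IH scalerA exprSr mulrC.
Qed.

Lemma eig_norm1 (R : realType) n (M : 'M[int]_n) l (w : 'cV[R[i]]_n) :
  (exists k : nat, (0 < k)%N /\ M ^+ k = 1) ->
  in_eigsp M l w -> w != 0 -> `|l| = 1.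
Proof.
move=> [k [k0 Mk]] hw w0.
have := eig_pow k hw; rewrite -toC_pow Mk /toC map_mx1 mul1mx.
move=> /eqP; rewrite -subr_eq0 -{1}(scale1r w) -scalerBl scaler_eq0 (negbTE w0) orbF.
rewrite subr_eq0 eq_sym => /eqP lk.
apply/eqP; rewrite -(pexpr_eq1 k0) ?normr_ge0 // -normrX lk normr1.
by [].
Qed.

Lemma eig_conj (R : realType) n (M : 'M[int]_n) l (w : 'cV[R[i]]_n) :
  in_eigsp M l w -> in_eigsp M l^* (cconj w).
Proof. by rewrite /in_eigsp -cconjM => ->; rewrite cconjZ. Qed.

Lemma LC_inv (R : realType) n (A M : 'M[int]_n)
  (hML : forall a b : 'cV[int]_n, bil A (M *m a) b = - bil A b a)
  (x y : 'cV[R[i]]_n) : LC A (toC R M *m x) (toC R M *m y) = LC A x y.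
Proof. by rewrite LC_skew // LC_skew // opprK. Qed.

Lemma orth1 (R : realType) n (A M : 'M[int]_n)
  (hML : forall a b : 'cV[int]_n, bil A (M *m a) b = - bil A b a)
  l1 l2 (w1 w2 : 'cV[R[i]]_n) :
  in_eigsp M l1 w1 -> in_eigsp M l2 w2 -> `|l2| = 1 -> l1 != l2 ->
  LC A w1 (cconj w2) = 0.
Proof.
move=> h1 h2 n2 ne.
have := LC_inv hML w1 (cconj w2).
rewrite h1 (eig_conj h2) LC_scaleL LC_scaleR mulrA => /eqP.
rewrite -subr_eq0 -{2}(mul1r (LC A w1 (cconj w2))) -mulrBl mulf_eq0.
case/orP => [|/eqP //]; rewrite subr_eq0 => /eqP e.
have : l1 * (l2^* * l2) = l2 by rewrite mulrA e mul1r.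
by rewrite -normCKC n2 expr1n mulr1 => /eqP; rewrite (negbTE ne).
Qed.

Lemma orth2 (R : realType) n (A M : 'M[int]_n)
  (hML : forall a b : 'cV[int]_n, bil A (M *m a) b = - bil A b a)
  l1 l2 (w1 w2 : 'cV[R[i]]_n) :
  in_eigsp M l1 w1 -> in_eigsp M l2 w2 -> `|l2| = 1 -> l1 != l2 ->
  LC A (cconj w1) w2 = 0.
Proof.
move=> h1 h2 n2 ne.
by rewrite -(cconjK w2) LC_conj (orth1 hML h1 h2 n2 ne) conjC0.
Qed.

Lemma gterm (R : realType) n (A M : 'M[int]_n)
  (hML : forall a b : 'cV[int]_n, bil A (M *m a) b = - bil A b a)
  l (w : 'cV[R[i]]_n) : in_eigsp M l w ->
  LC A w (cconj w) + LC A (cconj w) w = (1 - l) * LC A w (cconj w).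
Proof.
move=> hw; rewrite -[LC A (cconj w) w]opprK -(LC_skew hML) hw LC_scaleL.
by rewrite mulrBl mul1r.
Qed.

Lemma ReN (C : numClosedFieldType) (w : C) : 'Re (- w) = - 'Re w.
Proof. by rewrite !ReE rmorphN -opprD mulNr. Qed.

Lemma sqS1_sq (R : realType) (z : R[i]) : sqrtS1 z ^+ 2 = z.
Proof. by rewrite /sqrtS1; case: ifP; rewrite ?sqrrN sqrtCK. Qed.

Lemma sqS1_unit (R : realType) (l : R[i]) : `|l| = 1 ->
  sqrtS1 (- l) * (sqrtS1 (- l))^* = 1.
Proof.
move=> nl; rewrite -normCK.
have : `|sqrtS1 (- l)| ^+ 2 = 1 by rewrite -normrX sqS1_sq normrN nl.
move=> /eqP; rewrite (pexpr_eq1 (n := 2)) ?normr_ge0 // => /eqP ->.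
by rewrite expr1n.
Qed.

Lemma sqS1_Re (R : realType) (l : R[i]) : `|l| = 1 -> l != 1 ->
  0 < 'Re (sqrtS1 (- l)).
Proof.
move=> nl l1; rewrite /sqrtS1; set w := sqrtC (- l).
case: ifP => // /negbT h; rewrite ReN oppr_gt0.
have rw : 'Re w \is Num.real by apply: Creal_Re.
rewrite lt_def real_leNgt ?real0 // h andbT; apply/eqP => re0'.
have re0 : 'Re w = 0 by rewrite -re0'.
have ew : w = 'i * 'Im w by rewrite {1}(Crect w) re0 add0r.
have : w ^+ 2 = - l by rewrite sqrtCK.
rewrite ew exprMn sqrCi mulN1r => /eqP; rewrite eqr_opp => /eqP el.
have l0 : 0 <= l by rewrite -el -realEsqr Creal_Im.
by move: l1; rewrite -nl ger0_norm // eqxx.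
Qed.

Lemma sqS1_pos (R : realType) (l : R[i]) : `|l| = 1 -> l != 1 ->
  0 < sqrtS1 (- l) + (sqrtS1 (- l))^*.
Proof.
move=> nl l1; have := sqS1_Re nl l1; rewrite ReE.
by rewrite pmulr_lgt0 // invr_gt0 ltr0n.
Qed.

Lemma sqS1_rel (R : realType) (l X : R[i]) : `|l| = 1 ->
  (1 - l) * X = (sqrtS1 (- l) + (sqrtS1 (- l))^*) * (sqrtS1 (- l) * X).
Proof.
move=> nl; rewrite mulrA [in RHS]mulrDl -expr2 sqS1_sq [_^* * _]mulrC sqS1_unit //.
by rewrite addrC.
Qed.

Definition Pf (R : realType) n (M : 'M[int]_n) (t : seq R[i]) (x : 'cV[R[i]]_n) :=
  foldr (fun m y => toC R M *m y - m *: y) x t.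

Lemma Pf_sum (R : realType) n (M : 'M[int]_n) t (s : seq R[i]) (F : R[i] -> 'cV[R[i]]_n) :
  Pf M t (\sum_(l <- s) F l) = \sum_(l <- s) Pf M t (F l).
Proof.
elim: t => [//|m t IH] /=.
by rewrite IH mulmx_sumr scaler_sumr -sumrB.
Qed.

Lemma Pf_V (R : realType) n (M : 'M[int]_n) (V : {vspace 'cV[R[i]]_n})
  (hV : forall v, v \in V -> toC R M *m v \in V) t x :
  x \in V -> Pf M t x \in V.
Proof.
move=> xV; elim: t => [//|m t IH] /=.
by rewrite memvB ?memvZ ?hV.
Qed.

Lemma Pf_eig (R : realType) n (M : 'M[int]_n) t l (w : 'cV[R[i]]_n) :
  in_eigsp M l w -> Pf M t w = (\prod_(m <- t) (l - m)) *: w.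
Proof.
move=> hw; elim: t => [|m t IH] /=; first by rewrite big_nil scale1r.
rewrite IH -scalemxAr hw !scalerA -scalerBl big_cons; congr (_ *: _).
by rewrite mulrBl mulrC [m * _]mulrC.
Qed.

Lemma comp_in_V (R : realType) n (M : 'M[int]_n) (V : {vspace 'cV[R[i]]_n})
  (hV : forall v, v \in V -> toC R M *m v \in V) v s w :
  v \in V -> eig_decomp M v s w -> forall l, l \in s -> w l \in V.
Proof.
move=> vV [us [hw ev]] l ls.
set t := [seq m <- s | m != l].
have := Pf_V hV t vV; rewrite ev Pf_sum (bigD1_seq l) //=.
rewrite big1_seq ?addr0; last first.
  move=> m /andP [ml ms]; rewrite (Pf_eig _ (hw m ms)).
  have mt : m \in t by rewrite mem_filter ml ms.
  rewrite (bigD1_seq m) ?filter_uniq //= subrr mul0r scale0r //.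
rewrite (Pf_eig _ (hw l ls)) => hV'.
have c0 : \prod_(m <- t) (l - m) != 0.
  rewrite prodf_seq_neq0; apply/allP => m; rewrite mem_filter => /andP [ml _].
  by rewrite /= subr_eq0 eq_sym.
by rewrite -(scalerK c0 (w l)) memvZ.
Qed.

Lemma trmxX (F : comNzRingType) n (A : 'M[F]_n) k : (A^T) ^+ k = (A ^+ k)^T.
Proof.
elim: k => [|k IH]; first by rewrite !expr0 trmx1.
by rewrite exprS IH exprSr -!mulmxE trmx_mul.
Qed.

Lemma diag_exists (F : numClosedFieldType) n (B : 'M[F]_n.+1) k :
  (0 < k)%N -> B ^+ k = 1 ->
  exists2 rs : seq F, uniq rs & (\sum_(r <- rs) eigenspace B r :=: 1%:M)%MS.
Proof.
move=> k0 Bk; apply/diagonalizablePeigen; apply/diagonalizableP.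
have [r Dp] := closed_field_poly_normal ('X^k - 1%:P : {poly F}).
rewrite lead_coefXnsubC // scale1r in Dp.
exists r.
  rewrite -separable_prod_XsubC -Dp polyC1 separable_Xn_sub_1 //.
  by rewrite pnatr_eq0 -lt0n.
rewrite -Dp; apply: mxminpoly_min.
by rewrite rmorphB /= rmorphXn /= horner_mx_X horner_mx_C Bk subrr.
Qed.

Lemma decomp_exists (R : realType) n (M : 'M[int]_n.+1)
  (hfin : exists k : nat, (0 < k)%N /\ M ^+ k = 1) (v : 'cV[R[i]]_n.+1) :
  exists s w, eig_decomp M v s w.
Proof.
have [k [k0 Mk]] := hfin.
set B := (toC R M)^T.
have Bk : B ^+ k = 1 by rewrite /B trmxX -toC_pow Mk /toC map_mx1 trmx1.
have [rs urs rsP] := diag_exists k0 Bk.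
have : (v^T <= \sum_(r <- rs) eigenspace B r)%MS.
  have /eqmxP/andP [_ h] := rsP.
  exact: submx_trans (submx1 _) h.
rewrite (big_nth 0) big_mkord => /sub_sumsmxP [u_ hu].
pose w := fun l => oapp (fun i => (u_ i *m eigenspace B l)^T) 0
                    (insub (index l rs) : option 'I_(size rs)).
exists rs, w; split; first by [].
have wi : forall i : 'I_(size rs), w rs`_i = (u_ i *m eigenspace B rs`_i)^T.
  by move=> i; rewrite /w index_uniq // valK.
split.
  move=> l ls; have := ls; rewrite -index_mem => il.
  have -> : l = rs`_(Ordinal il) by rewrite /= nth_index.
  rewrite wi /in_eigsp.
  have /eigenspaceP e : (u_ (Ordinal il) *m eigenspace B rs`_(Ordinal il)
                          <= eigenspace B rs`_(Ordinal il))%MS by apply: submxMl.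
  by rewrite -(trmxK (toC R M)) -trmx_mul -/B e linearZ.
rewrite -[v]trmxK hu linear_sum /= (big_nth 0) big_mkord.
by apply: eq_bigr => i _; rewrite wi.
Qed.

Lemma sum_pos (F : numDomainType) (I : eqType) (s : seq I) (P : pred I) (f : I -> F) :
  uniq s -> (forall l, l \in s -> P l -> 0 <= f l) ->
  (exists2 l, l \in s & P l && (0 < f l)) -> 0 < \sum_(l <- s | P l) f l.
Proof.
move=> us hge [l0 l0s /andP [Pl0 fl0]].
rewrite -big_filter (bigD1_seq l0) ?filter_uniq ?mem_filter ?Pl0 //=.
apply: ltr_wpDr fl0; rewrite big_seq_cond; apply: sumr_ge0 => i /andP [].
by rewrite mem_filter => /andP [Pi iS] _; apply: hge.
Qed.

Lemma cconj_sum (R : realType) n (I : Type) (s : seq I) (F : I -> 'cV[R[i]]_n) :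
  cconj (\sum_(i <- s) F i) = \sum_(i <- s) cconj (F i).
Proof.
apply/matrixP => i j; rewrite !mxE !summxE rmorph_sum.
by apply: eq_bigr => k _; rewrite mxE.
Qed.

Lemma g_expand (R : realType) n (A M : 'M[int]_n)
  (hML : forall a b : 'cV[int]_n, bil A (M *m a) b = - bil A b a)
  (v : 'cV[R[i]]_n) s w :
  eig_decomp M v s w -> (forall l, l \in s -> w l != 0 -> `|l| = 1) ->
  LC A v (cconj v) + LC A (cconj v) v =
  \sum_(l <- s) (LC A (w l) (cconj (w l)) + LC A (cconj (w l)) (w l)).
Proof.
move=> [us [hw ev]] N; rewrite big_split /= ev cconj_sum !LC_sumL.
congr (_ + _); apply: eq_big_seq => l ls; rewrite ?LC_sumR.
  rewrite (bigD1_seq l) //= big1_seq ?addr0 // => m /andP [ml ms].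
  have [->|wm0] := eqVneq (w m) 0; first by rewrite cconj0 LC0r.
  by apply: (orth1 hML (hw l ls) (hw m ms) (N m ms wm0)); rewrite eq_sym.
rewrite (bigD1_seq l) //= big1_seq ?addr0 // => m /andP [ml ms].
have [->|wm0] := eqVneq (w m) 0; first by rewrite LC0r.
by apply: (orth2 hML (hw l ls) (hw m ms) (N m ms wm0)); rewrite eq_sym.
Qed.

Lemma key (R : realType) n (A M : 'M[int]_n)
  (hML : forall a b : 'cV[int]_n, bil A (M *m a) b = - bil A b a)
  (hfin : exists k : nat, (0 < k)%N /\ M ^+ k = 1)
  (V : {vspace 'cV[R[i]]_n})
  (h1 : forall v, v \in V -> toC R M *m v = v -> v = 0)
  l (w : 'cV[R[i]]_n) : in_eigsp M l w -> w \in V -> w != 0 ->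
  [/\ `|l| = 1, l != 1, 0 < sqrtS1 (- l) + (sqrtS1 (- l))^* &
      LC A w (cconj w) + LC A (cconj w) w =
      (sqrtS1 (- l) + (sqrtS1 (- l))^*) * hl A l w w].
Proof.
move=> hw wV w0.
have nl := eig_norm1 hfin hw w0.
have l1 : l != 1.
  apply/eqP => e; move: hw; rewrite /in_eigsp e scale1r => /(h1 _ wV) e0.
  by rewrite e0 eqxx in w0.
split => //; first exact: sqS1_pos.
by rewrite (gterm hML hw) (sqS1_rel _ nl).
Qed.

Lemma nz_comp (R : realType) n (M : 'M[int]_n) (v : 'cV[R[i]]_n) s w :
  eig_decomp M v s w -> v != 0 -> exists2 l, l \in s & w l != 0.
Proof.
move=> [_ [_ ev]] v0.
case: (boolP (has (fun l => w l != 0) s)) => [/hasP [l ls wl0]|hn].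
  by exists l.
move: v0; rewrite ev big1_seq ?eqxx // => l /andP [_ ls]; apply/eqP.
by move: hn => /hasPn /(_ l ls); rewrite negbK.
Qed.

Unset Implicit Arguments.
Set Strict Implicit.
Theorem lemma2p2 (R : realType) (n : nat) (A M : 'M[int]_n.+1)
  (hA : A \in unitmx) (hM : M \in unitmx)
  (hML : forall a b : 'cV[int]_n.+1, bil A (M *m a) b = - bil A b a)
  (hfin : exists k : nat, (0 < k)%N /\ M ^+ k = 1) :
  (forall l : R[i], is_eigenvalue M l -> l != 1 ->
     forall a b : 'cV[R[i]]_n.+1, in_eigsp M l a -> in_eigsp M l b ->
       hl A l b a = (hl A l a b)^* /\ hl A l a a \is Num.real)
  /\
  (forall V : {vspace 'cV[R[i]]_n.+1},
     (forall v, v \in V -> toC R M *m v \in V) ->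
     (forall v, v \in V -> toC R M *m v = v -> v = 0) ->
     (h_posdef A M V <-> g_posdef A V)).
Proof.
split.
  move=> l [v0 [v00 hv0]] l1.
  have nl := eig_norm1 hfin hv0 v00.
  have herm : forall a b, in_eigsp M l a -> in_eigsp M l b ->
      hl A l b a = (hl A l a b)^*.
    move=> a b ha hb.
    rewrite /hl rmorphM /= -LC_conj cconjK.
    rewrite -[LC A b (cconj a)]opprK -(LC_skew hML) (eig_conj ha) LC_scaleL.
    have e : l^* = - ((sqrtS1 (- l))^*) ^+ 2.
      by rewrite -rmorphXn sqS1_sq rmorphN opprK.
    by rewrite e mulNr opprK mulrA expr2 mulrA sqS1_unit // mul1r.
  move=> a b ha hb; split; first exact: herm.
  by rewrite CrealE; apply/eqP; rewrite -herm.
move=> V hV h1; split.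
- move=> hpos v vV v0.
  have [s [w hd]] := decomp_exists hfin v.
  have wV := comp_in_V hV vV hd.
  have [us [hw ev]] := hd.
  have N : forall l, l \in s -> w l != 0 -> `|l| = 1.
    by move=> l ls; apply: eig_norm1 hfin (hw l ls).
  rewrite (g_expand hML hd N).
  have tpos : forall l, l \in s -> w l != 0 ->
      0 < LC A (w l) (cconj (w l)) + LC A (cconj (w l)) (w l).
    move=> l ls wl0.
    have [nl l1 sp ->] := key hML hfin h1 (hw l ls) (wV l ls) wl0.
    apply: mulr_gt0 sp _.
    have := hpos (w l) (wV l ls) wl0 [:: l] (fun _ => w l).
    rewrite /h_diag big_cons l1 big_nil addr0; apply.
    split; first by [].
    split; first by move=> m; rewrite inE => /eqP ->; apply: hw.
    by rewrite big_cons big_nil addr0.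
  apply: (@sum_pos _ _ s xpredT) => //.
    move=> l ls _; have [->|wl0] := eqVneq (w l) 0.
      by rewrite cconj0 LC0l addr0.
    exact/ltW/tpos.
  have [l ls wl0] := nz_comp hd v0.
  by exists l => //=; apply: tpos.
- move=> gpos v vV v0 s w hd.
  have wV := comp_in_V hV vV hd.
  have [us [hw ev]] := hd.
  have Hpos : forall l, l \in s -> w l != 0 ->
      l != 1 /\ 0 < hl A l (w l) (w l).
    move=> l ls wl0.
    have [nl l1 sp e] := key hML hfin h1 (hw l ls) (wV l ls) wl0.
    split => //; rewrite -(pmulr_rgt0 _ sp) -e; exact: (gpos _ (wV l ls) wl0).
  apply: sum_pos => //.
    move=> l ls l1; have [->|wl0] := eqVneq (w l) 0.
      by rewrite /hl cconj0 LC0r mulr0.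
    by case: (Hpos l ls wl0) => _ /ltW.
  have [l ls wl0] := nz_comp hd v0.
  have [l1 hp] := Hpos l ls wl0.
  by exists l => //; rewrite l1 hp.
Qed.
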